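(* Let $M\ge1$ users be located at $(x_m,y_m,0)$, $1\le m\le M$, with $-\frac{D_{\rm L}}{2}\le x_m\le \frac{D_{\rm L}}{2}$ and $-\frac{D_{\rm W}}{2}\le y_m\le\frac{D_{\rm W}}{2}$, and let an antenna be placed at $(x,0,d)$, $d>0$. With $\eta>0,\sigma^2>0$ define $R_m^{\rm OMA}=\frac{1}{M}\log\left(1+\frac{\eta P_m}{\sigma^2((x-x_m)^2+y_m^2+d^2)}\right)$. For a target rate $R>0$ consider $$\min_{P_1,\dots,P_M,\ x}\ \sum_{m=1}^M P_m\quad\text{s.t.}\quad R_m^{\rm OMA}\ge R\ (1\le m\le M),\quad P_m\ge0,\quad -\frac{D_{\rm L}}{2}\le x\le\frac{D_{\rm L}}{2}.$$ Then the optimal antenna location is $x^*=\frac{1}{M}\sum_{m=1}^M x_m$ and the optimal powers are $P_m^*=\epsilon(x^*-x_m)^2+\tau_m$, $1\le m\le M$, where $\epsilon=\frac{\sigma^2}{\eta}(e^{MR}-1)$ and $\tau_m=\epsilon(y_m^2+d^2)$.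
   Context: Pinching-antenna system with a single antenna at $(x,0,d)$ on a waveguide at height $d$; users served by TDMA over $M$ slots; $\eta=\frac{c^2}{16\pi^2f_c^2}$, $\sigma^2$ is the noise power, $\log$ is the natural logarithm. *)

(* Defs.v *)
From Stdlib Require Import Reals.
Open Scope R_scope.

(* Sum over users m = 0 .. M-1 (paper's m = 1..M). *)
Fixpoint sum_users (M : nat) (f : nat -> R) : R :=
  match M with
  | O => 0
  | S k => sum_users k f + f k
  end.

Definition R_OMA (M : nat) (eta sigma2 d x xm ym P : R) : R :=
  / INR M * ln (1 + eta * P / (sigma2 * ((x - xm)^2 + ym^2 + d^2))).

Definition feasible (M : nat) (eta sigma2 d DL Rt : R) (xs ys : nat -> R)
  (P : nat -> R) (x : R) : Prop :=
  (forall m, (m < M)%nat -> R_OMA M eta sigma2 d x (xs m) (ys m) (P m) >= Rt) /\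
  (forall m, (m < M)%nat -> P m >= 0) /\
  - DL / 2 <= x <= DL / 2.

Definition optimal (M : nat) (eta sigma2 d DL Rt : R) (xs ys : nat -> R)
  (P : nat -> R) (x : R) : Prop :=
  feasible M eta sigma2 d DL Rt xs ys P x /\
  forall P' x', feasible M eta sigma2 d DL Rt xs ys P' x' ->
    sum_users M P <= sum_users M P'.

(* Main.v *)
Require Import Defs.
From Stdlib Require Import Reals Lra Lia.
Open Scope R_scope.

Lemma su_ext M f g : (forall m, (m < M)%nat -> f m = g m) -> sum_users M f = sum_users M g.
Proof. induction M; simpl; intros H; auto. rewrite IHM by (intros; apply H; lia). rewrite H by lia. auto. Qed.

Lemma su_le M f g : (forall m, (m < M)%nat -> f m <= g m) -> sum_users M f <= sum_users M g.
Proof. induction M; simpl; intros H; [lra|]. assert (f M <= g M) by (apply H; lia).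
 assert (sum_users M f <= sum_users M g) by (apply IHM; intros; apply H; lia). lra. Qed.

Lemma su_plus M f g : sum_users M (fun m => f m + g m) = sum_users M f + sum_users M g.
Proof. induction M; simpl; [lra|]. rewrite IHM. ring. Qed.

Lemma su_scal M c f : sum_users M (fun m => c * f m) = c * sum_users M f.
Proof. induction M; simpl; [lra|]. rewrite IHM. ring. Qed.

Lemma su_const M c : sum_users M (fun _ => c) = INR M * c.
Proof. induction M; cbn [sum_users]; [simpl; lra|]. rewrite IHM, S_INR. ring. Qed.

Lemma su_zero M h : (forall m, (m < M)%nat -> 0 <= h m) -> sum_users M h = 0 ->
  forall m, (m < M)%nat -> h m = 0.
Proof. induction M; simpl; intros H0 Hs m Hm; [lia|].
 assert (0 <= h M) by (apply H0; lia).
 assert (0 <= sum_users M h).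
 { pose proof (su_le M (fun _ => 0) h ltac:(intros; apply H0; lia)) as Hq.
   rewrite su_const in Hq. lra. }
 destruct (Nat.eq_dec m M). subst; lra.
 apply IHM; [intros; apply H0; lia| lra | lia]. Qed.

Lemma su_sq M xs x : sum_users M (fun m => (x - xs m)^2) =
  INR M * x^2 - 2 * x * sum_users M xs + sum_users M (fun m => xs m ^2).
Proof. induction M; cbn [sum_users]; [simpl; lra|]. rewrite IHM, S_INR. ring. Qed.

Lemma rate_lb M eta sigma2 d x xm ym P Rt : (1 <= M)%nat -> 0 < d -> 0 < eta -> 0 < sigma2 ->
  P >= 0 -> R_OMA M eta sigma2 d x xm ym P >= Rt ->
  P >= sigma2 / eta * (exp (INR M * Rt) - 1) * ((x - xm)^2 + ym^2 + d^2).
Proof. intros HM Hd He Hs HP H. unfold R_OMA in H.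
 set (D := (x - xm)^2 + ym^2 + d^2) in *.
 assert (HD : 0 < D) by (unfold D; pose proof (pow2_ge_0 (x - xm)); pose proof (pow2_ge_0 ym); simpl; nra).
 assert (HMp : 0 < INR M) by (apply lt_0_INR; lia).
 set (A := 1 + eta * P / (sigma2 * D)) in *.
 assert (HA0 : 0 <= eta * P / (sigma2 * D)) by (apply Rmult_le_pos; [nra| left; apply Rinv_0_lt_compat; nra]).
 assert (HA : 0 < A) by (unfold A; lra).
 assert (Hl : ln A >= INR M * Rt).
 { apply Rmult_ge_compat_l with (r := INR M) in H; [|lra].
   rewrite <- Rmult_assoc, Rinv_r in H by lra. lra. }
 assert (Hx : exp (INR M * Rt) <= A).
 { rewrite <- (exp_ln A) by lra. destruct (Req_dec (INR M * Rt) (ln A)) as [E|E].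
   rewrite E; lra. left. apply exp_increasing. lra. }
 unfold A in Hx.
 assert (eta * P / (sigma2 * D) * (sigma2 * D / eta) = P) by (field; split; lra).
 assert (exp (INR M * Rt) - 1 <= eta * P / (sigma2 * D)) by lra.
 assert (0 < sigma2 * D / eta) by (apply Rdiv_lt_0_compat; nra).
 assert (sigma2 / eta * (exp (INR M * Rt) - 1) * D = (exp (INR M * Rt) - 1) * (sigma2 * D / eta)) by (field; lra).
 nra.
Qed.

Theorem corollary1 (M : nat) (DL DW d eta sigma2 Rt : R) (xs ys : nat -> R) :
  (1 <= M)%nat ->
  (forall m, (m < M)%nat -> - DL / 2 <= xs m <= DL / 2) ->
  (forall m, (m < M)%nat -> - DW / 2 <= ys m <= DW / 2) ->
  0 < d -> 0 < eta -> 0 < sigma2 -> 0 < Rt ->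
  let xstar := / INR M * sum_users M xs in
  let eps := sigma2 / eta * (exp (INR M * Rt) - 1) in
  let tau := fun m => eps * (ys m ^ 2 + d ^ 2) in
  let Pstar := fun m => eps * (xstar - xs m) ^ 2 + tau m in
  optimal M eta sigma2 d DL Rt xs ys Pstar xstar /\
  (forall P x, optimal M eta sigma2 d DL Rt xs ys P x ->
     x = xstar /\ forall m, (m < M)%nat -> P m = Pstar m).
Proof.
  intros HM Hx Hy Hd He Hs HR xstar eps tau Pstar.
  assert (HMp : 0 < INR M) by (apply lt_0_INR; lia).
  assert (Hexp : 1 < exp (INR M * Rt)) by (rewrite <- exp_0; apply exp_increasing; nra).
  assert (Heps : 0 < eps) by (unfold eps; apply Rmult_lt_0_compat; [apply Rdiv_lt_0_compat|]; lra).
  set (c := fun m => ys m ^ 2 + d ^ 2).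
  assert (Hc : forall m, 0 < c m) by (intro; unfold c; nra).
  assert (HPs : forall m, Pstar m = eps * ((xstar - xs m)^2 + ys m^2 + d^2)) by
    (intro; unfold Pstar, tau; ring).
  assert (Hxs : - DL / 2 <= xstar <= DL / 2).
  { pose proof (su_le M (fun _ => - DL / 2) xs ltac:(intros; apply Hx; auto)) as H1.
    pose proof (su_le M xs (fun _ => DL / 2) ltac:(intros; apply Hx; auto)) as H2.
    rewrite su_const in H1, H2. unfold xstar.
    assert (/ INR M * (INR M * (DL/2)) = DL/2) by (field; lra).
    assert (/ INR M * (INR M * (- DL/2)) = - DL/2) by (field; lra).
    assert (0 < / INR M) by (apply Rinv_0_lt_compat; lra). split; nra. }
  assert (Hlb : forall P x, feasible M eta sigma2 d DL Rt xs ys P x ->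
     sum_users M P >= sum_users M Pstar + eps * INR M * (x - xstar)^2 /\
     forall m, (m < M)%nat -> P m >= eps * ((x - xs m)^2 + c m)).
  { intros P x [Hr [Hp _]].
    assert (Hm : forall m, (m < M)%nat -> P m >= eps * ((x - xs m)^2 + c m)).
    { intros m Hm. unfold eps, c. rewrite <- Rplus_assoc.
      apply (rate_lb M eta sigma2 d x (xs m) (ys m)); auto. }
    split; auto.
    pose proof (su_le M (fun m => eps * ((x - xs m)^2 + c m)) P ltac:(intros; apply Rge_le, Hm; auto)) as H1.
    rewrite su_scal, su_plus, su_sq in H1.
    rewrite (su_ext M Pstar (fun m => eps * ((xstar - xs m)^2 + c m))) by (intros; rewrite HPs; unfold c; ring).
    rewrite su_scal, su_plus, su_sq.
    assert (INR M * x ^ 2 - 2 * x * sum_users M xs =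
            INR M * xstar ^ 2 - 2 * xstar * sum_users M xs + INR M * (x - xstar)^2)
      by (unfold xstar; field; lra).
    nra. }
  assert (Hfeas : feasible M eta sigma2 d DL Rt xs ys Pstar xstar).
  { split; [|split; [intros m0 _; rewrite HPs; apply Rle_ge; apply Rmult_le_pos; [lra|]; pose proof (pow2_ge_0 (xstar - xs m0)); pose proof (pow2_ge_0 (ys m0)); pose proof (pow2_ge_0 d); lra | auto]].
    intros m Hm. unfold R_OMA. rewrite HPs.
    set (D := (xstar - xs m)^2 + ys m^2 + d^2).
    assert (0 < D) by (unfold D; pose proof (pow2_ge_0 (xstar - xs m)); pose proof (pow2_ge_0 (ys m)); simpl; nra).
    replace (1 + eta * (eps * D) / (sigma2 * D)) with (exp (INR M * Rt))
      by (unfold eps; field; repeat split; lra).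
    rewrite ln_exp. right. field. lra. }
  split.
  - split; auto. intros P' x' Hf. destruct (Hlb P' x' Hf) as [H1 _].
    assert (0 <= eps * INR M * (x' - xstar)^2) by (apply Rmult_le_pos; [apply Rmult_le_pos; lra | apply pow2_ge_0]). lra.
  - intros P x [Hf Hopt].
    destruct (Hlb P x Hf) as [H1 Hm].
    pose proof (Hopt Pstar xstar Hfeas) as H2.
    assert (Hz : eps * INR M * (x - xstar)^2 = 0) by
      (assert (0 <= eps * INR M * (x - xstar)^2) by (apply Rmult_le_pos; [apply Rmult_le_pos; lra | apply pow2_ge_0]); lra).
    assert (Hxx : x = xstar).
    { assert (0 < eps * INR M) by nra.
      assert ((x - xstar)^2 = 0) by (apply (Rmult_eq_reg_l (eps * INR M)); lra).
      nra. }
    split; auto. subst x.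
    assert (HS : sum_users M P = sum_users M Pstar) by lra.
    assert (Hz2 := su_zero M (fun m => P m - Pstar m)).
    intros m Hmm.
    assert (P m - Pstar m = 0).
    { apply Hz2; auto.
      - intros k Hk. specialize (Hm k Hk). rewrite HPs. unfold c in Hm. lra.
      - rewrite (su_ext M (fun m => P m - Pstar m) (fun m => P m + -1 * Pstar m)) by (intros; ring).
        rewrite (su_plus M P (fun m => -1 * Pstar m)).
        rewrite su_scal. lra. }
    lra.
Qed.
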